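(* Let $n\ge 2$ and let $\mathcal{B}$ be a nonempty subset of $\mathbb{S}^n$. Suppose that there exist positive numbers $\alpha_B>0$ $(B\in\mathcal{B})$ such that $\alpha_A A+\alpha_B B\in\mathbb{S}^n_+$ for every distinct pair $A,B\in\mathcal{B}$ (Condition (D)). Then: (1) (Condition (B)) for every $B\in\mathcal{B}$, $$\{X\in\mathbb{S}^n_+ : B\bullet X=0\}\subseteq\{X\in\mathbb{S}^n_+ : A\bullet X\ge 0 \text{ for all } A\in\mathcal{B}\};$$ (2) (Condition (B)') for every distinct pair $A,B\in\mathcal{B}$, $A_<\cap B_\le=\emptyset$, where for $C\in\mathbb{S}^n$, $$C_< = \left\{u\in\mathbb{R}^{n-1} : \begin{pmatrix}u\\1\end{pmatrix}^T C\begin{pmatrix}u\\1\end{pmatrix}<0\right\},\qquad C_\le = \left\{u\in\mathbb{R}^{n-1} : \begin{pmatrix}u\\1\end{pmatrix}^T C\begin{pmatrix}u\\1\end{pmatrix}\le 0\right\}.$$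
   Context: $\mathbb{S}^n$ denotes the space of real $n\times n$ symmetric matrices, $\mathbb{S}^n_+$ the cone of positive semidefinite matrices in $\mathbb{S}^n$, and $A\bullet X=\sum_{i,j}A_{ij}X_{ij}$ the trace inner product. *)

(* Defs.v *)
From HB Require Import structures.
From mathcomp Require Import all_boot all_order all_algebra.
Set Implicit Arguments. Unset Strict Implicit. Unset Printing Implicit Defensive.
Import Order.TTheory GRing.Theory Num.Theory.
Local Open Scope ring_scope.

Section Defs.
Variable R : realFieldType.

Definition symmx (n : nat) (A : 'M[R]_n) : Prop := A^T = A.

Definition qform (n : nat) (C : 'M[R]_n) (v : 'cV[R]_n) : R := (v^T *m C *m v) 0 0.

Definition psd (n : nat) (A : 'M[R]_n) : Prop :=
  symmx A /\ forall x : 'cV[R]_n, 0 <= qform A x.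

Definition frob (n : nat) (A X : 'M[R]_n) : R := \sum_(i < n) \sum_(j < n) A i j * X i j.

(* the vector (u; 1) in R^n for u in R^(n-1) *)
Definition homog (n : nat) (u : 'cV[R]_(n.-1)) : 'cV[R]_n :=
  \col_(i < n) (if @insub nat (fun k => (k < n.-1)%N) 'I_(n.-1) (val i) is Some k then u k 0 else 1).

Definition Clt (n : nat) (C : 'M[R]_n) (u : 'cV[R]_(n.-1)) : Prop := qform C (homog u) < 0.
Definition Cle (n : nat) (C : 'M[R]_n) (u : 'cV[R]_(n.-1)) : Prop := qform C (homog u) <= 0.
End Defs.

(* Main.v *)
Require Import Defs.
From HB Require Import structures.
From mathcomp Require Import all_boot all_order all_algebra.
From mathcomp Require Import ring lra zify.
Import Order.TTheory GRing.Theory Num.Theory.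
Local Open Scope ring_scope.

Section Aux.
Variable R : realFieldType.
Variable n : nat.
Implicit Types (A B C P X N : 'M[R]_n) (u v x : 'cV[R]_n).

Lemma qformE C v : qform C v = \sum_i \sum_j v i 0 * C i j * v j 0.
Proof.
rewrite /qform mxE (exchange_big) /=.
apply: eq_bigr => j _; rewrite mxE big_distrl /=.
by apply: eq_bigr => i _; rewrite !mxE.
Qed.

Lemma symE C i j : symmx C -> C i j = C j i.
Proof. by move=> hC; rewrite -[in LHS]hC mxE. Qed.

Definition bil C u v := \sum_i \sum_j u i 0 * C i j * v j 0.

Definition ev (p : 'I_n) : 'cV[R]_n := \col_i (i == p)%:R.

Lemma sum_ev (p : 'I_n) (F : 'I_n -> R) : \sum_i (ev p) i 0 * F i = F p.
Proof.
rewrite (bigD1 p) //= big1 => [|i /negbTE hi]; rewrite !mxE ?eqxx ?hi;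
  by rewrite ?mul1r ?addr0 ?mul0r.
Qed.

Lemma sum_ev_r (p : 'I_n) (F : 'I_n -> R) : \sum_i F i * (ev p) i 0 = F p.
Proof. by rewrite -(sum_ev p); apply: eq_bigr => i _; rewrite mulrC. Qed.

Lemma bil_evl C p v : bil C (ev p) v = \sum_j C p j * v j 0.
Proof.
rewrite /bil (eq_bigr (fun i => ev p i 0 * \sum_j C i j * v j 0)).
  by rewrite sum_ev.
by move=> i _; rewrite big_distrr; apply: eq_bigr => j _; rewrite /= mulrA.
Qed.

Lemma bil_ev C p q : bil C (ev p) (ev q) = C p q.
Proof. by rewrite bil_evl sum_ev_r. Qed.

Lemma qform_ev C p : qform C (ev p) = C p p.
Proof. by rewrite qformE -/(bil C (ev p) (ev p)) bil_ev. Qed.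

Lemma bil_evr C x p : bil C x (ev p) = \sum_i x i 0 * C i p.
Proof.
rewrite /bil; apply: eq_bigr => i _.
by rewrite -[RHS](sum_ev_r p (fun j => x i 0 * C i j)).
Qed.

Lemma bil_sym C u v : symmx C -> bil C v u = bil C u v.
Proof.
move=> hC; rewrite /bil exchange_big /=; apply: eq_bigr => i _.
apply: eq_bigr => j _; rewrite (symE C j i hC); ring.
Qed.

Lemma qformD C a u v : symmx C ->
  qform C (a *: u + v) = a ^+ 2 * qform C u + 2 * a * bil C u v + qform C v.
Proof.
move=> hC.
have -> : 2 * a * bil C u v = a * bil C u v + a * bil C v u.
  by rewrite bil_sym //; ring.
rewrite !qformE /bil !mulr_sumr -!big_split /=; apply: eq_bigr => i _.
rewrite !mulr_sumr -!big_split /=; apply: eq_bigr => j _.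
rewrite !mxE; ring.
Qed.

Lemma qform_lin a b A B v :
  qform (a *: A + b *: B) v = a * qform A v + b * qform B v.
Proof.
rewrite !qformE !mulr_sumr -!big_split /=; apply: eq_bigr => i _.
rewrite !mulr_sumr -!big_split /=; apply: eq_bigr => j _.
rewrite !mxE; ring.
Qed.

Lemma frob_lin a b A B X :
  frob (a *: A + b *: B) X = a * frob A X + b * frob B X.
Proof.
rewrite /frob !mulr_sumr -!big_split /=; apply: eq_bigr => i _.
rewrite !mulr_sumr -!big_split /=; apply: eq_bigr => j _.
rewrite !mxE; ring.
Qed.

Lemma frob_linr a b P X N :
  frob P (a *: X + b *: N) = a * frob P X + b * frob P N.
Proof.
rewrite /frob !mulr_sumr -!big_split /=; apply: eq_bigr => i _.
rewrite !mulr_sumr -!big_split /=; apply: eq_bigr => j _.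
rewrite !mxE; ring.
Qed.

Lemma psd_zero C u v : psd C -> qform C u = 0 -> bil C u v = 0.
Proof.
move=> [hs hq] hu; apply/eqP; apply/negP => hb.
set b := bil C u v; set q := qform C v.
have := hq ((- (q + 1) / (2 * b)) *: u + v).
rewrite qformD // hu mulr0 add0r.
have -> : 2 * (- (q + 1) / (2 * b)) * b = - (q + 1).
  by field; apply/negP.
rewrite -/q; lra.
Qed.

Lemma psd_cs C u p : psd C -> 0 < C p p ->
  0 <= qform C u - (C p p)^-1 * (bil C u (ev p)) ^+ 2.
Proof.
move=> [hs hq] hd.
have := hq ((- bil C u (ev p) / C p p) *: ev p + u).
rewrite qformD // qform_ev (bil_sym C u (ev p)) //.
set b := bil C u (ev p); set d := C p p.
have -> : (- b / d) ^+ 2 * d + 2 * (- b / d) * b + qform C u =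
          qform C u - d^-1 * b ^+ 2.
  by field; rewrite gt_eqF.
done.
Qed.

Lemma frob_rank1 P (c : 'cV[R]_n) :
  frob P (\matrix_(i, j) (c i 0 * c j 0)) = qform P c.
Proof.
rewrite qformE /frob; apply: eq_bigr => i _; apply: eq_bigr => j _.
rewrite mxE; ring.
Qed.

Lemma qform_rank1 (c : 'cV[R]_n) x :
  qform (\matrix_(i, j) (c i 0 * c j 0)) x = (\sum_i x i 0 * c i 0) ^+ 2.
Proof.
rewrite qformE expr2 big_distrl /=; apply: eq_bigr => i _.
rewrite big_distrr /=; apply: eq_bigr => j _.
rewrite mxE; ring.
Qed.

Definition supp k X := forall i j : 'I_n, (i + k < n)%N -> X i j = 0.

Lemma frob_psd_aux P : psd P -> forall k, (k <= n)%N ->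
  forall X, psd X -> supp k X -> 0 <= frob P X.
Proof.
move=> hP; elim=> [|k IH] hk X hX hsX.
  rewrite /frob big1 // => i _; rewrite big1 // => j _.
  by rewrite hsX ?addn0 ?mulr0.
have hpn : (n - k.+1 < n)%N by lia.
set p := Ordinal hpn.
have hpi : forall i : 'I_n, (i + k < n)%N -> ~~ (i + k.+1 < n)%N -> i = p.
  by move=> i h1 h2; apply/val_inj => /=; lia.
have hXp : forall j, X p j = X j p by move=> j; apply: symE; case: hX.
have hd0 : 0 <= X p p by rewrite -qform_ev; case: hX => _; apply.
have [hd|hd] := eqVneq (X p p) 0.
  have hrow : forall j, X p j = 0.
    by move=> j; rewrite -bil_ev; apply: psd_zero => //; rewrite qform_ev.
  apply: IH; [lia | exact: hX|] => i j hi.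
  case: (boolP (i + k.+1 < n)%N) => h; first by apply: hsX.
  by rewrite (hpi i hi h).
have dpos : 0 < X p p by rewrite lt_def hd.
set c : 'cV[R]_n := \col_i X i p.
set N := \matrix_(i, j) (c i 0 * c j 0).
set X' := 1 *: X + (- (X p p)^-1) *: N.
have hNe : forall i j, N i j = X i p * X j p by move=> i j; rewrite !mxE.
have hX'e : forall i j, X' i j = X i j - (X p p)^-1 * (X i p * X j p).
  by move=> i j; rewrite /X' /N /c !mxE; ring.
have hX' : psd X'.
  split.
    apply/matrixP => i j; rewrite mxE !hX'e (symE X i j (proj1 hX)); ring.
  move=> x; rewrite qform_lin qform_rank1 mul1r.
  have -> : \sum_i x i 0 * c i 0 = bil X x (ev p).
    by rewrite bil_evr; apply: eq_bigr => i _; rewrite mxE.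
  have := @psd_cs X x p hX dpos; rewrite -/(bil X x (ev p)); lra.
have hsX' : supp k X'.
  move=> i j hi; rewrite hX'e.
  case: (boolP (i + k.+1 < n)%N) => h; first by rewrite !(hsX i) // mul0r mulr0 subr0.
  rewrite (hpi i hi h) hXp; field; exact: hd.
have -> : X = 1 *: X' + (X p p)^-1 *: N.
  apply/matrixP => i j; rewrite /X' /N /c !mxE; ring.
rewrite frob_linr frob_rank1 mul1r.
apply: addr_ge0; first by apply: IH => //; lia.
apply: mulr_ge0; first by rewrite invr_ge0.
by case: hP => _; apply.
Qed.

Lemma frob_psd P X : psd P -> psd X -> 0 <= frob P X.
Proof.
move=> hP hX; apply: (@frob_psd_aux P hP n (leqnn n) X hX) => i j; lia.
Qed.

End Aux.

Theorem theorem1p1 (R : realFieldType) (n : nat) (Bset : 'M[R]_n -> Prop)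
  (alpha : 'M[R]_n -> R) :
  (2 <= n)%N ->
  (forall B, Bset B -> symmx B) ->
  (exists B, Bset B) ->
  (forall B, Bset B -> 0 < alpha B) ->
  (forall A B, Bset A -> Bset B -> A <> B -> psd (alpha A *: A + alpha B *: B)) ->
  (forall B, Bset B -> forall X : 'M[R]_n, psd X -> frob B X = 0 ->
      forall A, Bset A -> 0 <= frob A X) /\
  (forall A B, Bset A -> Bset B -> A <> B ->
      forall u : 'cV[R]_(n.-1), ~ (Clt A u /\ Cle B u)).
Proof.
move=> _ _ _ hpos hD; split.
  move=> B hB X hX hBX A hA.
  case: (eqVneq A B) => [-> | /eqP hAB]; first by rewrite hBX.
  have := @frob_psd R n _ _ (hD A B hA hB hAB) hX.
  rewrite frob_lin hBX mulr0 addr0 pmulr_rge0 //; exact: hpos.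
move=> A B hA hB hAB u [hlt hle].
case: (hD A B hA hB hAB) => _ /(_ (homog u)).
rewrite qform_lin.
move: hlt hle; rewrite /Clt /Cle => hlt hle.
have := hpos A hA; have := hpos B hB.
set a := alpha A; set b := alpha B; set qa := qform A _; set qb := qform B _.
move=> hb ha.
have : a * qa < 0 by rewrite pmulr_rlt0.
have : b * qb <= 0 by rewrite pmulr_rle0.
lra.
Qed.
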